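(* For $n\in\mathbb{N}$, let $G_n$ be the sink parity game with player 0 vertices $a_1,\dots,a_n$, player 1 vertices $b_1,\dots,b_{n+1}$ and sink $\top$, with priorities $\pi(a_i)=2i+1$ and $\pi(b_i)=2i+2$, and write $a_{n+1}:=\top$. For every $i\in[n]$, $a_i$ has an edge to $a_{i+1}$ with Bland number $2i-1$ and an edge to $b_{i+1}$ with Bland number $2i$, and $b_i$ has edges to $b_{i+1}$ and to $a_{i+1}$; $b_{n+1}$ has a single edge to $\top$, and $\top$ has its self-loop. Let $\sigma_0$ be the player 0 strategy with $\sigma_0(a_i)=a_{i+1}$ for all $i\in[n]$. Then strategy improvement with Bland's rule, started at $\sigma_0$, takes $2^n-1$ iterations to solve $G_n$. Moreover, the order of the valuations of $a_1$ and $b_1$ changes in every iteration (i.e. between any two consecutive strategies of the run, which of $\mathrm{val}(a_1)$, $\mathrm{val}(b_1)$ is larger with respect to $\triangleleft$ switches).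
   Context: A sink parity game is a tuple $(V_0,V_1,E,\pi)$ specifying a directed graph on $V_G=V_0\cup V_1\cup\{\top\}$ in which every vertex has an outgoing edge, the sink $\top$ has only the self-loop as outgoing edge, and $\pi:V_G\to\mathbb{Z}\cup\{-\infty\}$ is a priority function with $\pi(\top)=-\infty$ (only at $\top$). Player $i$ owns $V_i$; player 0 edges are edges leaving $V_0$. A player-$i$ strategy is a map $\sigma:V_i\to V_G$ along edges; $E_\sigma$ consists of the edges $(v,\sigma(v))$, $v\in V_i$, and all edges leaving vertices not in $V_i$. A player 0 strategy is admissible if every cycle of $E_\sigma$ not containing $\top$ has even highest priority. For finite multisets $S_1,S_2$ of integers, $S_1\triangleleft S_2$ means $\sum_{s\in S_1}(-|V_0\cup V_1|)^s<\sum_{s\in S_2}(-|V_0\cup V_1|)^s$ (with multiplicity). For admissible $\sigma$, with $\bar\sigma$ an optimal (valuation-minimizing) counterstrategy of player 1, the play from $v_0$ is a simple path $v_0,\dots,v_k,\top$ and $\mathrm{val}_\sigma(v_0)=\{\pi(v_0),\dots,\pi(v_k)\}$ (multiset). A player 0 edge $(v,w)$ is an improving switch for $\sigma$ if $\mathrm{val}_\sigma(w)\triangleright\mathrm{val}_\sigma(\sigma(v))$; applying it redirects $v$ to $w$. Strategy improvement repeatedly applies one improving switch until none exists (optimal strategy); each application is one iteration. Bland's rule applies the improving switch with the smallest Bland number. *)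

(* Defs.v *)
From mathcomp Require Import all_boot all_order all_algebra.
Set Implicit Arguments. Unset Strict Implicit. Unset Printing Implicit Defensive.
Import Order.TTheory GRing.Theory Num.Theory.
Local Open Scope ring_scope.

(* A sink parity game: finite vertex type, the sink [sink], the set of
   player-0 vertices [own0] (every vertex that is neither in own0 nor the
   sink belongs to player 1), the edge relation, priorities and Bland
   numbers of (player 0) edges.  The priority of the sink is -oo: the value
   [prio sink] is never used (the sink is excluded from valuations and cycles
   through the sink are excluded from the admissibility condition). *)
Record spg := SPG {
  vtx : finType;
  sink : vtx;
  own0 : pred vtx;
  edge : rel vtx;
  prio : vtx -> int;
  bland : vtx -> vtx -> nat
}.
Arguments sink : clear implicits.
Arguments own0 : clear implicits.
Arguments edge : clear implicits.
Arguments prio : clear implicits.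
Arguments bland : clear implicits.

Section SPG.
Variable G : spg.
Local Notation V := (vtx G).

(* |V_0 \cup V_1| *)
Definition nV : nat := #|V|.-1.

Definition mweight (S : seq int) : rat := \sum_(s <- S) (- (nV%:R : rat)) ^ s.

Definition mlt (S1 S2 : seq int) : bool := mweight S1 < mweight S2.

(* A player-0 strategy is a function V -> V; only its values on own0 matter. *)
Definition strategy := V -> V.

Definition Esig (s : strategy) : rel V :=
  fun u w => if own0 G u then w == s u else edge G u w.

Definition is_strategy (s : strategy) : Prop :=
  forall v, own0 G v -> edge G v (s v).

Definition maxprio (c : seq V) : int :=
  foldr Num.max (prio G (head (sink G) c)) [seq prio G x | x <- c].

Definition admissible (s : strategy) : Prop :=
  is_strategy s /\
  forall c : seq V, c != [::] -> cycle (Esig s) c -> sink G \notin c ->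
    (2 %| maxprio c)%Z.

(* plays of sigma against a counterstrategy, from v: simple E_sigma-paths
   v, v_1, ..., top  (p lists the vertices after v) *)
Definition play (s : strategy) (v : V) (p : seq V) : bool :=
  [&& path (Esig s) v p, last v p == sink G & uniq (v :: p)].

Definition pmset (v : V) (p : seq V) : seq int :=
  [seq prio G x | x <- v :: p & x != sink G].

(* S is val_sigma(v): the multiset of the play of sigma against an optimal
   (valuation-minimizing) counterstrategy *)
Definition is_val (s : strategy) (v : V) (S : seq int) : Prop :=
  (exists p, play s v p /\ S = pmset v p) /\
  (forall p, play s v p -> ~~ mlt (pmset v p) S).

Definition improving (s : strategy) (v w : V) : Prop :=
  own0 G v /\ edge G v w /\
  exists Sw Ss, is_val s w Sw /\ is_val s (s v) Ss /\ mlt Ss Sw.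

Definition switch (s : strategy) (v w : V) : strategy :=
  fun x => if x == v then w else s x.

Definition bland_step (s s' : strategy) : Prop :=
  exists v w, improving s v w /\
    (forall v' w', improving s v' w' -> (bland G v w <= bland G v' w')%N) /\
    (forall x, s' x = switch s v w x).

Definition optimal (s : strategy) : Prop := forall v w, ~ improving s v w.

End SPG.

(* inl (inl i) = a_{i+1} (i < n), inl (inr j) = b_{j+1} (j < n+1), inr tt = top *)
Definition Gv (n : nat) : finType := ('I_n + 'I_n.+1 + unit)%type.

Definition Gtop (n : nat) : Gv n := inr tt.

(* a_i, 1-indexed; a_i := top when i is not in [1, n] (so a_{n+1} = top) *)
Definition av (n i : nat) : Gv n :=
  match i with
  | 0 => Gtop n
  | k.+1 => match (insub k : option 'I_n) with
            | Some o => inl (inl o) | None => Gtop n end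
  end.

(* b_i, 1-indexed, for i in [1, n+1]; top otherwise *)
Definition bv (n i : nat) : Gv n :=
  match i with
  | 0 => Gtop n
  | k.+1 => match (insub k : option 'I_n.+1) with
            | Some o => inl (inr o) | None => Gtop n end
  end.

Definition Gown0 (n : nat) : pred (Gv n) :=
  fun x => if x is inl (inl _) then true else false.

Definition Gedge (n : nat) : rel (Gv n) :=
  fun x y => match x with
  | inl (inl i) => (y == av n i.+2) || (y == bv n i.+2)
  | inl (inr j) => if (j < n)%N then (y == bv n j.+2) || (y == av n j.+2)
                   else y == Gtop n
  | inr _ => y == Gtop n
  end.

(* pi(a_i) = 2i+1, pi(b_i) = 2i+2 (1-indexed); the sink gets a dummy value,
   its priority -oo is never used *)
Definition Gprio (n : nat) (x : Gv n) : int :=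
  match x with
  | inl (inl i) => (2 * i.+1 + 1)%:Z
  | inl (inr j) => (2 * j.+1 + 2)%:Z
  | inr _ => 0
  end.

Definition Gbland (n : nat) (x y : Gv n) : nat :=
  match x with
  | inl (inl i) => if y == av n i.+2 then (2 * i.+1 - 1)%N else (2 * i.+1)%N
  | _ => 0%N
  end.

Definition Ggame (n : nat) : spg :=
  @SPG (Gv n) (Gtop n) (@Gown0 n) (@Gedge n) (@Gprio n) (@Gbland n).

Definition sigma0 (n : nat) : strategy (Ggame n) :=
  fun x => match x with
  | inl (inl i) => av n i.+2
  | _ => x
  end.

Arguments Gtop : clear implicits.
Arguments av : clear implicits.
Arguments bv : clear implicits.
Arguments sigma0 : clear implicits.

(* Main.v *)
Require Import Defs.
From mathcomp Require Import all_boot all_order all_algebra.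
From mathcomp Require Import zify ring lra.
From Stdlib Require Import FunctionalExtensionality.
Set Implicit Arguments. Unset Strict Implicit. Unset Printing Implicit Defensive.
Import Order.TTheory GRing.Theory Num.Theory.
Local Open Scope ring_scope.

Lemma val_uniq (G : spg) (s : strategy G) v S1 S2 :
  is_val s v S1 -> is_val s v S2 -> mweight G S1 = mweight G S2.
Proof.
move=> [[p1 [P1 ->]] L1] [[p2 [P2 ->]] L2].
have := L1 _ P2; have := L2 _ P1; rewrite /mlt -!leNgt => h1 h2.
by apply/eqP; rewrite eq_le h1 h2.
Qed.

Lemma mweight_cons (G : spg) a S :
  mweight G (a :: S) = (- (nV G)%:R) ^ a + mweight G S.
Proof. by rewrite /mweight big_cons. Qed.

Section Generic.
Variable G : spg.
Local Notation V := (vtx G).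
Local Notation sk := (sink G).
Variables (s : strategy G) (m : V -> nat) (nx : V -> V).
Hypothesis m_sink : m sk = 0%N.
Hypothesis Hdec : forall v w, v != sk -> Esig s v w -> (m w < m v)%N.
Hypothesis Hsink : forall w, Esig s sk w -> w = sk.

Lemma path_meas u p : path (Esig s) u p -> forall y, y \in p -> y = sk \/ (m y < m u)%N.
Proof.
elim: p u => [|z p IH] u //= /andP[e pp] y.
rewrite inE => /orP[/eqP->|yp].
  case: (eqVneq u sk) => [ue|une]; first by left; apply: Hsink; rewrite -ue.
  by right; apply: Hdec.
case: (IH _ pp _ yp) => [->|lt]; first by left.
case: (eqVneq u sk) => [ue|une].
  by move: e; rewrite ue => /Hsink ze; move: lt; rewrite ze m_sink.
by right; apply: (ltn_trans lt); apply: Hdec.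
Qed.

Lemma no_cycle c : c != [::] -> cycle (Esig s) c -> sk \notin c -> False.
Proof.
case: c => [|x c] // _ /= cyc nin.
have := path_meas cyc (y:=x); rewrite mem_rcons inE eqxx => /(_ isT) [xe|]; last by rewrite ltnn.
by move: nin; rewrite -xe inE eqxx.
Qed.

Hypothesis Hnx : forall v, v != sk -> Esig s v (nx v).

Fixpoint Ff (f : nat) (v : V) : seq int :=
  match f with
  | 0 => [::]
  | f'.+1 => if v == sk then [::] else prio G v :: Ff f' (nx v)
  end.

Definition F v := Ff (m v) v.

Lemma m0_sink v : m v = 0%N -> v = sk.
Proof.
move=> h; case: (eqVneq v sk) => // /[dup] vn /Hnx /(Hdec vn).
by rewrite h.
Qed.

Lemma Ff_irr f1 f2 v : (m v <= f1)%N -> (m v <= f2)%N -> Ff f1 v = Ff f2 v.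
Proof.
elim: f1 f2 v => [|f1 IH] f2 v /=.
  by rewrite leqn0 => /eqP/m0_sink ->; case: f2 => //= f2; rewrite eqxx.
move=> h1 h2; case: (eqVneq v sk) => [->|vn]; first by case: (f2) => //= ?; rewrite eqxx.
have lt := Hdec vn (Hnx vn).
move: h2; case: f2 => [|f2] h2; first by move: lt; rewrite leqn0 in h2; rewrite (eqP h2).
rewrite /= (negPf vn); congr (_ :: _); apply: IH; lia.
Qed.

Lemma F_sink : F sk = [::].
Proof. by rewrite /F m_sink. Qed.

Lemma F_rec v : v != sk -> F v = prio G v :: F (nx v).
Proof.
move=> vn; have lt := Hdec vn (Hnx vn).
rewrite /F; case E: (m v) lt => [|f] // lt.
rewrite /= (negPf vn); congr (_ :: _); apply: Ff_irr => //.
Qed.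

Lemma pmset_cons v w p : v != sk -> pmset v (w :: p) = prio G v :: pmset w p.
Proof. by move=> vn; rewrite /pmset /= vn. Qed.

Hypothesis Hopt : forall v w, v != sk -> Esig s v w ->
  (mweight G (F (nx v)) <= mweight G (F w)).

Lemma F_val v : is_val s v (F v).
Proof.
have [c] := ubnP (m v); elim: c v => // c IH v Hv.
case: (eqVneq v sk) => [->|vn].
  rewrite F_sink; split.
    by exists [::]; rewrite /play /pmset /= eqxx.
  case=> [|y p]; first by rewrite /pmset /= eqxx /mlt ltxx.
  rewrite /play /= => /and3P[/andP[/Hsink -> _] _].
  by rewrite inE eqxx.
have lt := Hdec vn (Hnx vn).
have [[p0 [P0 E0]] _] := IH (nx v) (leq_trans lt Hv).
split.
  exists (nx v :: p0); split; last by rewrite pmset_cons // -E0 F_rec.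
  move: P0; rewrite /play /= => /and3P[pp -> ->]; rewrite Hnx //= pp /= andbT.
  apply/negP => vin.
  have : path (Esig s) v (nx v :: p0) by rewrite /= Hnx.
  move/path_meas => /(_ v vin) [/eqP|]; by [rewrite (negPf vn) | rewrite ltnn].
case=> [|w p]; first by rewrite /play /= (negPf vn).
rewrite /play /= => /and3P[/andP[e pp] la /andP[_ un]].
have [_ L] := IH w (leq_trans (Hdec vn e) Hv).
have := L p; rewrite /play pp la /= un => /(_ isT).
rewrite /mlt -!leNgt (pmset_cons _ _ vn) (F_rec vn) => h.
move: h; rewrite !mweight_cons lerD2l => h.
exact: le_trans (Hopt vn e) h.
Qed.

End Generic.
Local Open Scope nat_scope.
Definition bit (k i : nat) : bool := odd (k %/ 2 ^ i).

Lemma bit0 k : bit k 0 = odd k.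
Proof. by rewrite /bit expn0 divn1. Qed.

Lemma bitS k i : bit k i.+1 = bit k./2 i.
Proof. by rewrite /bit expnS divnMA divn2. Qed.

Lemma bit_ge n k i : k < 2 ^ n -> n <= i -> bit k i = false.
Proof.
move=> hk hi; rewrite /bit divn_small //; apply: (leq_trans hk).
by rewrite leq_exp2l.
Qed.

Lemma half_succ k : k.+1./2 = odd k + k./2.
Proof. by rewrite -uphalfE uphalf_half. Qed.

Lemma bit_incr j k : (forall i, i < j -> bit k i) -> ~~ bit k j ->
  forall i, bit k.+1 i = if i < j then false else if i == j then true else bit k i.
Proof.
elim: j k => [|j IH] k hlt hj i.
  rewrite bit0 in hj; case: i => [|i]; first by rewrite bit0 /= (negPf hj).
  by rewrite !bitS half_succ (negPf hj).
have ok : odd k by rewrite -bit0; apply: hlt.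
case: i => [|i]; first by rewrite bit0 /= ok.
rewrite !bitS half_succ ok add1n IH //.
- by move=> i' h; rewrite -bitS; apply: hlt.
- by rewrite -bitS.
Qed.

Lemma all_bits_ge m k : (forall i, i < m -> bit k i) -> 2 ^ m - 1 <= k.
Proof.
elim: m k => [|m IH] k h; first by rewrite expn0.
have ok : odd k by rewrite -bit0; apply: h.
have := IH k./2 (fun i hi => etrans (esym (bitS k i)) (h i.+1 hi)).
have := odd_double_half k; rewrite ok -muln2 expnS.
have := expn_gt0 2 m; lia.
Qed.

Lemma bits_full n i : i < n -> bit (2 ^ n - 1) i.
Proof.
elim: n i => [|n IH] i // hi.
have e : 2 ^ n.+1 - 1 = true + (2 ^ n - 1).*2.
  rewrite expnS -muln2; have := expn_gt0 2 n; lia.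
case: i hi => [|i] hi; first by rewrite bit0 e oddD odd_double.
by rewrite bitS e half_bit_double; apply: IH.
Qed.
Local Open Scope ring_scope.
Section Game.
Variable n : nat.
Local Notation G := (Ggame n).
Local Notation top := (Gtop n).

Lemma av_lt i (h : (i < n)%N) : av n i.+1 = inl (inl (Ordinal h)).
Proof. by rewrite /av insubT. Qed.
Lemma av_ge i : (n <= i)%N -> av n i.+1 = top.
Proof. by move=> h; rewrite /av insubF // ltnNge h. Qed.
Lemma bv_lt i (h : (i < n.+1)%N) : bv n i.+1 = inl (inr (Ordinal h)).
Proof. by rewrite /bv insubT. Qed.
Lemma bv_ge i : (n.+1 <= i)%N -> bv n i.+1 = top.
Proof. by move=> h; rewrite /bv insubF // ltnNge h. Qed.

Lemma nVE : nV G = (2 * n + 1)%N.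
Proof. rewrite /nV /= !card_sum !card_ord card_unit addn1 /=; lia. Qed.

Lemma xpow (e : nat) : (- (nV G)%:R : rat) ^ (e%:Z) = (-1) ^+ odd e * ((2 * n + 1)%:R) ^+ e.
Proof. by rewrite nVE signr_odd -exprNn. Qed.

Definition mG (v : Gv n) : nat :=
  match v with inl (inl o) => n.+2 - o | inl (inr o) => n.+2 - o | inr _ => 0 end.

Lemma mG_av i : (mG (av n i.+2) <= n.+1 - i)%N.
Proof. case: (ltnP i.+1 n) => h; [rewrite (av_lt h) /=; lia | by rewrite av_ge]. Qed.
Lemma mG_bv i : (mG (bv n i.+2) <= n.+1 - i)%N.
Proof. case: (ltnP i.+1 n.+1) => h; [rewrite (bv_lt h) /=; lia | by rewrite bv_ge]. Qed.

Definition X : rat := (2 * n + 1)%:R.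
Definition Pw (o : nat) : rat := X ^+ (2 * o.+1 + 1).

Lemma X_ge1 : 1 <= X.
Proof. by rewrite /X ler1n; lia. Qed.
Lemma X_ge3 : (0 < n)%N -> 3 <= X.
Proof. by move=> h; rewrite /X ler_nat; lia. Qed.
Lemma Pw_gt0 o : 0 < Pw o.
Proof. by rewrite /Pw exprn_gt0 // (lt_le_trans ltr01 X_ge1). Qed.
Lemma PwS o : Pw o.+1 = X * (X * Pw o).
Proof. by rewrite /Pw -!exprS; congr (_ ^+ _); lia. Qed.

Lemma prio_a (o : 'I_n) : (- (nV G)%:R : rat) ^ (prio G (inl (inl o))) = - Pw o.
Proof.
rewrite /= xpow oddD oddM /= expr1 mulN1r /Pw //.
Qed.
Lemma prio_b (o : 'I_n.+1) : (- (nV G)%:R : rat) ^ (prio G (inl (inr o))) = X * Pw o.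
Proof.
rewrite /= xpow oddD oddM /= expr0 mul1r /Pw -exprS; congr (_ ^+ _); lia.
Qed.

Variable k : nat.
Hypothesis hk : (k < 2 ^ n)%N.

Definition sg (x : Gv n) : Gv n :=
  match x with
  | inl (inl o) => if bit k o != bit k o.+1 then bv n o.+2 else av n o.+2
  | _ => x
  end.

Definition nxG (x : Gv n) : Gv n :=
  match x with
  | inl (inl o) => sg x
  | inl (inr o) => if bit k o.+1 then bv n o.+2 else av n o.+2
  | inr _ => top
  end.

Lemma L_dec (v w : Gv n) : v != top -> Esig (G:=G) sg v w -> (mG w < mG v)%N.
Proof.
case: v => [[o|o]|[]] // _; rewrite /Esig /=.
  move/eqP->; have := ltn_ord o.
  by case: ifP => _; [have := mG_bv o | have := mG_av o]; rewrite /=; lia.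
have := ltn_ord o; case: ifP => ho.
  by move=> ? /orP[/eqP->|/eqP->]; [have := mG_bv o | have := mG_av o]; rewrite /=; lia.
by move=> ? /eqP->; rewrite /=; lia.
Qed.

Lemma L_sink (w : Gv n) : Esig (G:=G) sg top w -> w = top.
Proof. by rewrite /Esig /= => /eqP. Qed.

Lemma L_nx (v : Gv n) : v != top -> Esig (G:=G) sg v (nxG v).
Proof.
case: v => [[o|o]|[]] // _; rewrite /Esig /= ?eqxx //.
case: ifP => ho; first by case: ifP; rewrite eqxx ?orbT.
have e : o = n :> nat by have := ltn_ord o; lia.
rewrite e insubF; last by rewrite ltnn.
rewrite insubF; last by apply/negbTE; rewrite -leqNgt.
by case: ifP.
Qed.


Arguments av : simpl never.
Arguments bv : simpl never.

Definition FG := F (G:=G) mG nxG.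
Definition WG (v : Gv n) : rat := mweight G (FG v).

Lemma WG_top : WG top = 0.
Proof. by rewrite /WG /FG /F /= /mweight big_nil. Qed.

Lemma WG_rec (v : Gv n) : v != top ->
  WG v = (- (nV G)%:R : rat) ^ (prio G v) + WG (nxG v).
Proof.
move=> vn; rewrite /WG /FG (@F_rec G sg mG nxG erefl L_dec L_nx v vn).
by rewrite mweight_cons.
Qed.

Lemma bit_n : bit k n = false.
Proof. exact: bit_ge hk _. Qed.

Definition Lev (o : nat) : Prop :=
  if bit k o then WG (bv n o.+1) + Pw o <= WG (av n o.+1)
  else WG (av n o.+1) + Pw o <= WG (bv n o.+1).

Lemma Lev_base : Lev n.
Proof.
rewrite /Lev bit_n (av_ge (leqnn n)) (bv_lt (ltnSn n)) WG_top add0r.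
rewrite WG_rec // prio_b /=.
rewrite (bv_ge (leqnn _)) (av_ge (leqnSn _)) if_same WG_top addr0.
have := Pw_gt0 n; have := X_ge1; nra.
Qed.

Lemma Lev_step o : (o < n)%N -> Lev o.+1 -> Lev o.
Proof.
move=> h; have h1 : (o < n.+1)%N by lia.
rewrite /Lev (av_lt h) (bv_lt h1) [WG (inl (inl _))]WG_rec // [WG (inl (inr _))]WG_rec //.
rewrite prio_a prio_b /= PwS.
have hP := Pw_gt0 o; have hX := X_ge3 (leq_ltn_trans (leq0n o) h).
set P := Pw o.
have hQ : X * P + 2 * P <= X * (X * P).
  have h0 : 0 <= (X - 2) * ((X + 1) * P).
    apply: mulr_ge0; first by rewrite subr_ge0 (le_trans _ hX) // ler_nat.
    apply: mulr_ge0; last exact: ltW.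
    by apply: addr_ge0; [apply: le_trans X_ge1 | ].
  have e : (X - 2) * ((X + 1) * P) = X * (X * P) - X * P - 2 * P by ring.
  by move: h0; rewrite e; lra.
have hQ0 : 0 <= X * P by apply: mulr_ge0; [apply: le_trans X_ge1 | exact: ltW].
move: hQ hQ0 hP; rewrite -/P; set Q := X * P; set R := X * Q => hQ hQ0 hP.
by case: (bit k o); case: (bit k o.+1) => /=; lra.
Qed.

Lemma Lev_all o : (o <= n)%N -> Lev o.
Proof.
have [d] := ubnP (n - o); elim: d o => [|d IH] o // hd ho.
case: (eqVneq o n) => [->|on]; first exact: Lev_base.
apply: Lev_step; first lia.
apply: IH; lia.
Qed.

Lemma Hopt (v w : Gv n) : v != top -> Esig (G:=G) sg v w -> WG (nxG v) <= WG w.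
Proof.
case: v => [[o|o]|[]] // _; rewrite /Esig /=.
  by move/eqP->.
case: ifP => ho.
  have := Lev_all ho; rewrite /Lev; have := Pw_gt0 o.+1.
  by case: (bit k o.+1) => hP hL /orP[/eqP->|/eqP->]; lra.
have e : o = n :> nat by have := ltn_ord o; lia.
by rewrite e bv_ge // av_ge // if_same => /eqP->.
Qed.

Lemma FG_val (v : Gv n) : is_val (G:=G) sg v (FG v).
Proof. exact: (@F_val G sg mG nxG erefl L_dec L_sink L_nx Hopt v). Qed.

Lemma val_W (v : Gv n) S : is_val (G:=G) sg v S -> mweight G S = WG v.
Proof. by move=> h; rewrite (val_uniq h (FG_val v)). Qed.

Lemma Lev_lt o : (o <= n)%N ->
  if bit k o then WG (bv n o.+1) < WG (av n o.+1) else WG (av n o.+1) < WG (bv n o.+1).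
Proof.
move=> h; have := Lev_all h; rewrite /Lev; have := Pw_gt0 o.
by case: (bit k o) => ? ?; lra.
Qed.

Definition oth (o : 'I_n) : Gv n :=
  if bit k o != bit k o.+1 then av n o.+2 else bv n o.+2.

Lemma imp_cmp (o : 'I_n) :
  if bit k o then WG (oth o) < WG (sg (inl (inl o)))
  else WG (sg (inl (inl o))) < WG (oth o).
Proof.
have := Lev_lt (ltn_ord o : (o.+1 <= n)%N); rewrite /oth /=.
by case: (bit k o); case: (bit k o.+1) => /= ?; lra.
Qed.

Lemma improving_char (v w : Gv n) : improving (G:=G) sg v w ->
  exists o : 'I_n, v = inl (inl o) /\ ~~ bit k o /\ w = oth o.
Proof.
case: v => [[o|o]|[]]; rewrite /improving => -[] // _ [ed [Sw [Ss [hw [hs hl]]]]].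
exists o; move: hl; rewrite /mlt (val_W hw) (val_W hs).
move: ed (imp_cmp o); rewrite /oth /=.
by case: (bit k o); case: (bit k o.+1) => /= /orP[/eqP->|/eqP->] /= h1 h2;
  first [by do !split | exfalso; lra].
Qed.

Lemma improving_intro (o : 'I_n) : ~~ bit k o -> improving (G:=G) sg (inl (inl o)) (oth o).
Proof.
move=> hb; split => //; split.
  by rewrite /= /oth; case: ifP => _; rewrite eqxx ?orbT.
exists (FG (oth o)), (FG (sg (inl (inl o)))); split; first exact: FG_val.
split; first exact: FG_val.
by rewrite /mlt; have := imp_cmp o; rewrite (negbTE hb).
Qed.

Lemma adm : admissible (G:=G) sg.
Proof.
split.
  by case=> [[o|o]|[]] //= _; case: ifP => _; rewrite eqxx ?orbT.
move=> c c0 cy nin; exfalso; exact: (@no_cycle G sg mG erefl L_dec L_sink c c0 cy nin).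
Qed.

Lemma opt_all : (forall o : 'I_n, bit k o) -> optimal (G:=G) sg.
Proof.
by move=> h v w /improving_char [o [_ [hb _]]]; move: hb; rewrite h.
Qed.

End Game.

Lemma sg0 n : sg (n:=n) 0 = sigma0 n.
Proof.
apply: functional_extensionality => -[[o|o]|[]] //=.
by rewrite /bit !div0n.
Qed.

Lemma sg_step n k (j : nat) (jn : (j < n)%N) :
  (forall i, (i < j)%N -> bit k i) -> ~~ bit k j ->
  forall x, sg (n:=n) k.+1 x = switch (G:=Ggame n) (sg (n:=n) k) (inl (inl (Ordinal jn))) (oth k (Ordinal jn)) x.
Proof.
move=> hlt hj; have hb := bit_incr hlt hj.
case=> [[p|p]|[]] //; rewrite /switch /=.
case: (eqVneq p (Ordinal jn)) => [->|ne] /=.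
  rewrite eqxx /oth /= !hb ltnn eqxx (negbTE hj) ltnNge leqnSn /= (gtn_eqF (ltnSn j)).
  by case: (bit k j.+1).
have -> : (inl (inl p) == inl (inl (Ordinal jn)) :> Gv n) = false.
  by apply/eqP => -[] /eqP; rewrite (negbTE ne).
rewrite !hb.
have pj : (p : nat) != j by apply: contra ne => /eqP pe; apply/eqP/val_inj.
case: (ltngtP p j) => h.
- case: (eqVneq p.+1 j) => e.
    by rewrite e ltnn /= (negbTE hj) hlt.
  have h2 : (p.+1 < j)%N by lia.
  by rewrite h2 !hlt.
- have e1 : (p.+1 < j)%N = false by lia.
  have e2 : (p.+1 == j) = false by lia.
  by rewrite e1 e2.
- by move: pj; rewrite h eqxx.
Qed.

Lemma mltW n k (v w : Gv n) : mlt (Ggame n) (FG k v) (FG k w) = (WG k v < WG k w).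
Proof. by []. Qed.

Theorem lemma15 (n : nat) :
  exists sig : nat -> strategy (Ggame n),
    sig 0%N = sigma0 n /\
    (forall k, (k <= 2 ^ n - 1)%N -> admissible (sig k)) /\
    (forall k, (k < 2 ^ n - 1)%N -> bland_step (sig k) (sig k.+1)) /\
    optimal (sig (2 ^ n - 1)%N) /\
    (forall k, (k < 2 ^ n - 1)%N ->
       exists Sa Sb Sa' Sb',
         is_val (sig k) (av n 1) Sa /\ is_val (sig k) (bv n 1) Sb /\
         is_val (sig k.+1) (av n 1) Sa' /\ is_val (sig k.+1) (bv n 1) Sb' /\
         ((mlt (Ggame n) Sa Sb /\ mlt (Ggame n) Sb' Sa') \/ (mlt (Ggame n) Sb Sa /\ mlt (Ggame n) Sa' Sb'))).
Proof.
have pos := expn_gt0 2 n.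
exists (fun k => sg (n:=n) k); split; first exact: sg0.
split.
  move=> k hk; apply: adm; lia.
split.
  move=> k hk; have hk' : (k < 2 ^ n)%N by lia.
  have ex : exists i, ~~ bit k i by exists n; rewrite (bit_n hk').
  case: (ex_minnP ex) => j hj hmin.
  have hlt : forall i, (i < j)%N -> bit k i.
    move=> i hi; apply/negPn/negP => /hmin; lia.
  have jn : (j < n)%N.
    rewrite ltnNge; apply/negP => nj.
    have := @all_bits_ge n k (fun i hi => hlt i (leq_trans hi nj)); lia.
  exists (inl (inl (Ordinal jn))), (oth k (Ordinal jn)); split.
    exact: improving_intro.
  split; last exact: sg_step.
  move=> v' w' /(improving_char hk') [o' [-> [hb ->]]].
  have jo : (j <= o')%N by apply: hmin.
  rewrite /=; case: (ltngtP j o') jo => // h _.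
    by case: ifP; case: ifP => _ _; lia.
  have -> : o' = Ordinal jn by apply: val_inj.
  by [].
split.
  apply: opt_all; first by lia.
  by move=> o; apply: bits_full.
move=> k hk; have hk' : (k < 2 ^ n)%N by lia.
have hk1 : (k.+1 < 2 ^ n)%N by lia.
exists (FG k (av n 1)), (FG k (bv n 1)), (FG k.+1 (av n 1)), (FG k.+1 (bv n 1)).
do 4 (split; first exact: FG_val).
have := Lev_lt hk' (leq0n n); have := Lev_lt hk1 (leq0n n).
rewrite !mltW !bit0 oddS.
by case: (odd k) => /= h1 h2; [right | left]; split.
Qed.
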